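(* For each of the three games with payoff matrices $$A_1=\begin{pmatrix}0&-3&3\\2&0&-2\\-1&1&0\end{pmatrix},\quad A_2=\begin{pmatrix}0&-2&3\\2&0&-1\\-3&1&0\end{pmatrix},\quad A_3=\begin{pmatrix}0&-1&3\\2&0&-3\\-2&1&0\end{pmatrix},$$ the IBR dynamics has a unique rest point in the interior of $\Delta$, and this rest point is repelling: the Jacobian of the dynamics restricted to $\Delta$ (in two affine coordinates) at this rest point has two eigenvalues with positive real parts. For $A_1$ the interior rest point is $(\tfrac13,\tfrac13,\tfrac13)$ and the eigenvalues are $\frac{1\pm 2i\sqrt{26}}{27}$.
   Context: Let $n\ge 2$ and consider a symmetric two-player game with strategy set $S=\{1,\dots,n\}$ and payoff matrix $A=(\pi_{ij})_{i,j\in S}$, where $\pi_{ij}\in\mathbb{R}$ is the payoff of a player using strategy $i$ against an opponent using strategy $j$. The state space is the simplex $\Delta=\{x\in\mathbb{R}^n: x_i\ge 0,\ \sum_i x_i=1\}$, where $x_i$ is the population share using strategy $i$. The imitate-the-better-realization (IBR) dynamics is the ODE on $\Delta$ $$\dot x_i = x_i\sum_{j=1}^n\sum_{k=1}^n\sum_{m=1}^n x_jx_kx_m\big(\mathbf 1\{\pi_{jk}<\pi_{im}\}-\mathbf 1\{\pi_{jk}>\pi_{im}\}\big),\quad i\in S.$$ Here $n=3$. *)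

(* Defs.v *)
From Stdlib Require Import Reals Lra.
Open Scope R_scope.

(* Strategies are indexed 0,1,2 (paper's 1,2,3).  A state is x : nat -> R,
   of which only x 0, x 1, x 2 matter. *)

Definition cmpR (a b : R) : R :=
  (if Rlt_dec a b then 1 else 0) - (if Rlt_dec b a then 1 else 0).

Definition IBR (A : nat -> nat -> R) (x : nat -> R) (i : nat) : R :=
  x i * sum_f_R0 (fun j => sum_f_R0 (fun k => sum_f_R0 (fun m =>
          x j * x k * x m * cmpR (A j k) (A i m)) 2) 2) 2.

Definition interior (x : nat -> R) : Prop :=
  0 < x 0%nat /\ 0 < x 1%nat /\ 0 < x 2%nat /\ x 0%nat + x 1%nat + x 2%nat = 1.

Definition rest_point (A : nat -> nat -> R) (x : nat -> R) : Prop :=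
  forall i, (i < 3)%nat -> IBR A x i = 0.

Definition chart (y1 y2 : R) : nat -> R :=
  fun i => match i with 0%nat => y1 | 1%nat => y2 | _ => 1 - y1 - y2 end.

(* J = [[J11 J12];[J21 J22]] is the Jacobian at p of the dynamics restricted
   to the simplex in the affine coordinates (x_1, x_2). *)
Definition is_jacobian (A : nat -> nat -> R) (p : nat -> R)
    (J11 J12 J21 J22 : R) : Prop :=
  derivable_pt_lim (fun t => IBR A (chart t (p 1%nat)) 0%nat) (p 0%nat) J11 /\
  derivable_pt_lim (fun t => IBR A (chart (p 0%nat) t) 0%nat) (p 1%nat) J12 /\
  derivable_pt_lim (fun t => IBR A (chart t (p 1%nat)) 1%nat) (p 0%nat) J21 /\
  derivable_pt_lim (fun t => IBR A (chart (p 0%nat) t) 1%nat) (p 1%nat) J22.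

Definition Cplx := (R * R)%type.
Definition Cmul (z w : Cplx) : Cplx :=
  (fst z * fst w - snd z * snd w, fst z * snd w + snd z * fst w).
Definition Csub (z w : Cplx) : Cplx := (fst z - fst w, snd z - snd w).
Definition Creal (a : R) : Cplx := (a, 0).

Definition is_eigenvalue2 (J11 J12 J21 J22 : R) (l : Cplx) : Prop :=
  Csub (Cmul (Csub (Creal J11) l) (Csub (Creal J22) l))
       (Creal (J12 * J21)) = (0, 0).

Definition Game1 (i j : nat) : R :=
  match i, j return R with
  | O, O => 0 | O, S O => -3 | O, S (S O) => 3
  | S O, O => 2 | S O, S O => 0  | S O, S (S O) => -2
  | S (S O), O => -1 | S (S O), S O => 1 | S (S O), S (S O) => 0
  | _,_ => 0 end.
Definition Game2 (i j : nat) : R :=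
  match i, j return R with
  | O, O => 0 | O, S O => -2 | O, S (S O) => 3
  | S O, O => 2 | S O, S O => 0  | S O, S (S O) => -1
  | S (S O), O => -3 | S (S O), S O => 1 | S (S O), S (S O) => 0
  | _,_ => 0 end.
Definition Game3 (i j : nat) : R :=
  match i, j return R with
  | O, O => 0 | O, S O => -1 | O, S (S O) => 3
  | S O, O => 2 | S O, S O => 0  | S O, S (S O) => -3
  | S (S O), O => -2 | S (S O), S O => 1 | S (S O), S (S O) => 0
  | _,_ => 0 end.

Definition unique_repelling_interior_rest (A : nat -> nat -> R) (p : nat -> R) : Prop :=
  interior p /\ rest_point A p /\
  (forall y, interior y -> rest_point A y -> forall i, (i < 3)%nat -> y i = p i) /\
  exists J11 J12 J21 J22, is_jacobian A p J11 J12 J21 J22 /\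
    forall l, is_eigenvalue2 J11 J12 J21 J22 l -> 0 < fst l.

(* Main.v *)
Require Import Defs.
From Stdlib Require Import Reals Lra Psatz.
From Coquelicot Require Import Coquelicot.
Open Scope R_scope.

Lemma cmpR_lt a b : a < b -> cmpR a b = 1.
Proof. intro H; unfold cmpR; destruct (Rlt_dec a b); destruct (Rlt_dec b a); lra. Qed.
Lemma cmpR_gt a b : b < a -> cmpR a b = -1.
Proof. intro H; unfold cmpR; destruct (Rlt_dec a b); destruct (Rlt_dec b a); lra. Qed.
Lemma cmpR_eq a b : a = b -> cmpR a b = 0.
Proof. intro H; unfold cmpR; destruct (Rlt_dec a b); destruct (Rlt_dec b a); lra. Qed.

Ltac cmp_simpl :=
  repeat match goal with
  | |- context [cmpR ?a ?b] =>
      first [ rewrite (cmpR_lt a b) by lra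
            | rewrite (cmpR_gt a b) by lra
            | rewrite (cmpR_eq a b) by lra ]
  end.

Lemma bt (c u v : R) (k m : nat) : 0 <= c -> 0 <= u -> 0 <= v -> 0 <= c * (u ^ k * v ^ m).
Proof.
  intros Hc Hu Hv. apply Rmult_le_pos; auto.
  apply Rmult_le_pos; apply pow_le; auto.
Qed.

Definition F2_0 (x0 x1 x2 : R) : R := (1 * x2^3 + 1 * x1 * x2^2 + (-1) * x1^2 * x2 + (-1) * x1^3 + 1 * x0 * x2^2 + 2 * x0 * x1 * x2 + (-1) * x0 * x1^2 + 1 * x0^2 * x2 + (-1) * x0^2 * x1).

Lemma IBR2_0 x : IBR Game2 x 0%nat = x 0%nat * F2_0 (x 0%nat) (x 1%nat) (x 2%nat).
Proof. unfold IBR, F2_0. simpl sum_f_R0. unfold Game2. cmp_simpl. ring. Qed.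

Definition F2_1 (x0 x1 x2 : R) : R := ((-1) * x2^3 + (-1) * x1 * x2^2 + (-1) * x1^2 * x2 + 1 * x0 * x2^2 + 2 * x0 * x1 * x2 + 1 * x0 * x1^2 + (-1) * x0^2 * x2 + 1 * x0^2 * x1 + 1 * x0^3).

Lemma IBR2_1 x : IBR Game2 x 1%nat = x 1%nat * F2_1 (x 0%nat) (x 1%nat) (x 2%nat).
Proof. unfold IBR, F2_1. simpl sum_f_R0. unfold Game2. cmp_simpl. ring. Qed.

Definition F2_2 (x0 x1 x2 : R) : R := (1 * x1 * x2^2 + 1 * x1^2 * x2 + 1 * x1^3 + (-1) * x0 * x2^2 + (-2) * x0 * x1 * x2 + (-1) * x0 * x1^2 + (-1) * x0^2 * x2 + (-1) * x0^2 * x1 + (-1) * x0^3).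

Lemma IBR2_2 x : IBR Game2 x 2%nat = x 2%nat * F2_2 (x 0%nat) (x 1%nat) (x 2%nat).
Proof. unfold IBR, F2_2. simpl sum_f_R0. unfold Game2. cmp_simpl. ring. Qed.

Lemma Fsum2 x0 x1 x2 : x0 * (F2_0 x0 x1 x2) + x1 * (F2_1 x0 x1 x2) + x2 * (F2_2 x0 x1 x2) = 0.
Proof. unfold F2_0, F2_1, F2_2. ring. Qed.

Definition P2 (a : R) : R := (12 + a * ((-104) + a * (376 + a * ((-948) + a * (1712 + a * ((-2336) + a * (2308 + a * ((-1640) + a * (744 + a * ((-188))))))))))).

Definition dP2 (a : R) : R := ((-104) + a * (752 + a * ((-2844) + a * (6848 + a * ((-11680) + a * (13848 + a * ((-11480) + a * (5952 + a * ((-1692)))))))))).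

Lemma P2_deriv c : derivable_pt_lim P2 c (dP2 c).
Proof. apply is_derive_Reals. unfold P2, dP2. auto_derive; [trivial|ring]. Qed.
Lemma P2_derivable : derivable P2.
Proof. intro c. exists (dP2 c). apply P2_deriv. Qed.

Definition r1_2 (a : R) : R := (4 + a * ((-10) + a * (20 + a * ((-20) + a * (10))))).

Definition r0_2 (a : R) : R := ((-2) + a * (6 + a * ((-10) + a * (6 + a * ((-2) + a * ((-2))))))).

Definition e2_2 (a : R) : R := (0 + a * ((-2))).

Lemma U2 a w : 1 * a^2 * P2 a = (12 * a^2 + (-8) * a^2 * w + 16 * a^2 * w^2 + (-48) * a^3 + 32 * a^3 * w + (-40) * a^3 * w^2 + 96 * a^4 + (-80) * a^4 * w + 80 * a^4 * w^2 + (-152) * a^5 + 136 * a^5 * w + (-80) * a^5 * w^2 + 144 * a^6 + (-112) * a^6 * w + 40 * a^6 * w^2 + (-80) * a^7 + 48 * a^7 * w + 12 * a^8) * ((F2_0 a w (1 - a - w))) + (32 * a^2 + (-128) * a^3 + 32 * a^3 * w + 336 * a^4 + (-80) * a^4 * w + (-560) * a^5 + 160 * a^5 * w + 672 * a^6 + (-160) * a^6 * w + (-464) * a^7 + 80 * a^7 * w + 176 * a^8) * ((F2_2 a w (1 - a - w))).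
Proof. unfold P2, F2_0, F2_1, F2_2. ring. Qed.

Lemma V2 a w : 1 * (r1_2 a * w + r0_2 a) = ((-2) + 2 * a + 2 * a * w + (-2) * a^2) * ((F2_0 a w (1 - a - w))) + (4 * a^2) * ((F2_2 a w (1 - a - w))).
Proof. unfold r1_2, r0_2, F2_0, F2_1, F2_2. ring. Qed.

Lemma X2 a w : 1 * (r1_2 a)^2 * ((F2_0 a w (1 - a - w))) = (1 * a^2) * P2 a + ((-8) + 32 * a + (-8) * a * w + (-84) * a^2 + 20 * a^2 * w + 140 * a^3 + (-40) * a^3 * w + (-168) * a^4 + 40 * a^4 * w + 116 * a^5 + (-20) * a^5 * w + (-44) * a^6) * (r1_2 a * w + r0_2 a).
Proof. unfold P2, r1_2, r0_2, F2_0, F2_1, F2_2. ring. Qed.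

Lemma Y2 a w : 1 * (e2_2 a)^2 * ((F2_2 a w (1 - a - w))) = (2 + (-2) * a + (-2) * a * w + 2 * a^2) * ((F2_0 a w (1 - a - w))) + (1) * (r1_2 a * w + r0_2 a).
Proof. unfold e2_2, r1_2, r0_2, F2_0, F2_1, F2_2. ring. Qed.

Definition J11_2 (t c : R) : R := (1 + (-2) * c + (-4) * t + 8 * t * c + (-4) * t * c^2 + 6 * t^2 + (-12) * t^2 * c + (-4) * t^3).

Definition J12_2 (t c : R) : R := ((-2) * t + 4 * t^2 + (-4) * t^2 * c + (-4) * t^3).

Definition J21_2 (t c : R) : R := (4 * c + (-4) * c^2 + 2 * c^3 + (-12) * t * c + 8 * t * c^2 + 12 * t^2 * c).

Definition J22_2 (t c : R) : R := ((-1) + 4 * c + (-6) * c^2 + 4 * c^3 + 4 * t + (-8) * t * c + 6 * t * c^2 + (-6) * t^2 + 8 * t^2 * c + 4 * t^3).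

Definition Ntr2 (a : R) : R := (0 + a * (48 + a * ((-480) + a * (2464 + a * ((-8624) + a * (22320 + a * ((-44752) + a * (70800 + a * ((-89264) + a * (88656 + a * ((-67088) + a * (35600 + a * ((-10224) + a * ((-1152) + a * (2256 + a * ((-688))))))))))))))))).

Lemma Ntr2_id a w : 1 * (r1_2 a)^3 * (J11_2 a w + J22_2 a w) = (1) * Ntr2 a + ((-64) * w + 64 * w^2 + 24 * a + 336 * a * w + (-320) * a * w^2 + (-168) * a^2 + (-1160) * a^2 * w + 1040 * a^2 * w^2 + 608 * a^3 + 2744 * a^3 * w + (-2240) * a^3 * w^2 + (-1576) * a^4 + (-4768) * a^4 * w + 3520 * a^4 * w^2 + 2864 * a^5 + 6192 * a^5 * w + (-4000) * a^5 * w^2 + (-3936) * a^6 + (-5840) * a^6 * w + 3200 * a^6 * w^2 + 4104 * a^7 + 3760 * a^7 * w + (-1600) * a^7 * w^2 + (-3080) * a^8 + (-1480) * a^8 * w + 400 * a^8 * w^2 + 1472 * a^9 + 280 * a^9 * w + (-344) * a^10) * (r1_2 a * w + r0_2 a).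
Proof. unfold Ntr2, r1_2, r0_2, J11_2, J12_2, J21_2, J22_2. ring. Qed.

Definition Ndet2 (a : R) : R := (0 + a * (10240 + a * ((-202240) + a * (2102784 + a * ((-15103360) + a * (83422720 + a * ((-374988864) + a * (1419789056 + a * ((-4631965568) + a * (13227875072 + a * ((-33442329472) + a * (75463393280 + a * ((-152888752832) + a * (279266215680 + a * ((-461156036992) + a * (689462660480 + a * ((-933604573312) + a * (1144153446656 + a * ((-1266677088192) + a * (1262910752000 + a * ((-1128955725440) + a * (899409820672 + a * ((-633504278144) + a * (390403054080 + a * ((-207620836160) + a * (93540327680 + a * ((-34797386368) + a * (10292878720 + a * ((-2279024640) + a * (337770240 + a * ((-25387520)))))))))))))))))))))))))))))))).

Lemma Ndet2_id a w : 1 * (r1_2 a)^6 * (J11_2 a w * J22_2 a w - J12_2 a w * J21_2 a w) = (1) * Ndet2 a + (2048 + (-8192) * w + 12288 * w^2 + (-8192) * w^3 + (-35840) * a + 143360 * a * w + (-217088) * a * w^2 + 151552 * a * w^3 + (-16384) * a * w^4 + 337664 * a^2 + (-1321472) * a^2 * w + 1986560 * a^2 * w^2 + (-1392640) * a^2 * w^3 + 204800 * a^2 * w^4 + (-2222080) * a^3 + 8396544 * a^3 * w + (-12424192) * a^3 * w^2 + 8611840 * a^3 * w^3 + (-1433600) * a^3 * w^4 + 11302336 * a^4 + (-40862848) * a^4 * w + 59163904 * a^4 * w^2 + (-40190464) * a^4 * w^3 + 7065600 * a^4 * w^4 + (-46842432) * a^5 + 160920384 * a^5 * w + (-226890240)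 * a^5 * w^2 + 150116608 * a^5 * w^3 + (-26956800) * a^5 * w^4 + 163272576 * a^6 + (-529963712) * a^6 * w + 724519168 * a^6 * w^2 + (-464590592) * a^6 * w^3 + 83520000 * a^6 * w^4 + (-488535040) * a^7 + 1490905728 * a^7 * w + (-1968036096) * a^7 * w^2 + 1217717760 * a^7 * w^3 + (-216192000) * a^7 * w^4 + 1272350784 * a^8 + (-3634059712) * a^8 * w + 4612074496 * a^8 * w^2 + (-2741930240) * a^8 * w^3 + 475776000 * a^8 * w^4 + (-2911906688) * a^9 + 7748678976 * a^9 * w + (-9412143360) * a^9 * w^2 + 5352971520 * a^9 * w^3 + (-899904000) * a^9 * w^4 + 5893785536 * a^10 + (-14543562368) * a^10 * w + 16824859648 * a^10 * w^2 + (-9110853120) * a^10 * w^3 + 1472000000 * a^10 * w^4 + (-10592922496) * a^11 + 24116694272 * a^11 * w + (-26426791936) * a^11 * w^2 + 13553984000 * a^11 * w^3 + (-2087680000) * a^11 * w^4 + 16941428608 * a^12 + (-35385960576) * a^12 * w + 36501864960 * a^12 * w^2 + (-17624563200) * a^12 * w^3 + 2565760000 * a^12 * w^4 + (-24118425344) * a^13 + 45922637056 * a^13 * w + (-44275919360) * a^13 * w^2 + 19981593600 * a^13 * w^3 + (-2722560000) * a^13 * w^4 + 30523828096 * a^14 + (-52588938112) * a^14 * w + 46994483200 * a^14 * w^2 + (-19650419200) * a^14 * w^3 + 2476800000 * a^14 * w^4 + (-34237555968) * a^15 + 52911422336 * a^15 * w + (-43385003520) * a^15 * w^2 + 16625728000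 * a^15 * w^3 + (-1910400000) * a^15 * w^4 + 33869482816 * a^16 + (-46464242048) * a^16 * w + 34528032000 * a^16 * w^2 + (-11956928000) * a^16 * w^3 + 1228800000 * a^16 * w^4 + (-29341527360) * a^17 + 35280315200 * a^17 * w + (-23391552000) * a^17 * w^2 + 7184160000 * a^17 * w^3 + (-643200000) * a^17 * w^4 + 22044329088 * a^18 + (-22865252800) * a^18 * w + 13252793600 * a^18 * w^2 + (-3517152000) * a^18 * w^3 + 264000000 * a^18 * w^4 + (-14175023616) * a^19 + 12425080960 * a^19 * w + (-6122732800) * a^19 * w^2 + 1351360000 * a^19 * w^3 + (-80000000) * a^19 * w^4 + 7662112064 * a^20 + (-5520207040) * a^20 * w + 2221440000 * a^20 * w^2 + (-383520000) * a^20 * w^3 + 16000000 * a^20 * w^4 + (-3394803584) * a^21 + 1931611200 * a^21 * w + (-595744000) * a^21 * w^2 + 71840000 * a^21 * w^3 + (-1600000) * a^21 * w^4 + 1187817280 * a^22 + (-501296000) * a^22 * w + 105536000 * a^22 * w^2 + (-6720000) * a^22 * w^3 + (-309172480) * a^23 + 86300800 * a^23 * w + (-9344000) * a^23 * w^2 + 53578880 * a^24 + (-7468800) * a^24 * w + (-4693760) * a^25) * (r1_2 a * w + r0_2 a).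
Proof. unfold Ndet2, r1_2, r0_2, J11_2, J12_2, J21_2, J22_2. ring. Qed.

Lemma P2_left (a : R) : 0 <= 10000 * a -> 10000 * a <= 2306 -> 0 < P2 a.
Proof.
  intros H1 H2. pose (X := 11999301574956940230021119254699112448 * ((10000 * a - 0)^0 * (2306 - 10000 * a)^9) + (84011314174612462070190073292292012032 * ((10000 * a - 0)^1 * (2306 - 10000 * a)^8) + (260109968058449848280760293169168048128 * ((10000 * a - 0)^2 * (2306 - 10000 * a)^7) + (464769491568414979321774017394725445632 * ((10000 * a - 0)^3 * (2306 - 10000 * a)^6) + (523870281166764984182661026092088168448 * ((10000 * a - 0)^4 * (2306 - 10000 * a)^5) + (381254677006094801895301026092088168448 * ((10000 * a - 0)^5 * (2306 - 10000 * a)^4) + (174896156820375911449526465394725445632 * ((10000 * a - 0)^6 * (2306 - 10000 * a)^3) + (46231368779375602932183465265168048128 * ((10000 * a - 0)^7 * (2306 - 10000 * a)^2) + (5391490558246576072860048176091052032 * ((10000 * a - 0)^8 * (2306 - 10000 * a)^1) + (1287815149998018343922659307705597431062039170448740525609582592)))))))))).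
  assert (HX : 0 < X) by (unfold X; repeat (apply Rplus_le_lt_0_compat; [apply bt; lra|]); lra).
  assert (E : 1843884555393597767925757968896000000000000000000000000000000000000 * P2 a =  X) by (unfold X, P2; ring).
  clearbody X. lra.
Qed.

Lemma P2_right (a : R) : 2307 <= 10000 * a -> 10000 * a <= 10000 -> P2 a < 0.
Proof.
  intros H1 H2. pose (X := 17977479006910070196429520688985352556 * ((10000 * a - 2307)^1 * (10000 - 10000 * a)^8) + (109357186577225743677586737493983490224 * ((10000 * a - 2307)^2 * (10000 - 10000 * a)^7) + (345184047685053858045284224817428143856 * ((10000 * a - 2307)^3 * (10000 - 10000 * a)^6) + (680732288018899733098351035226142215784 * ((10000 * a - 2307)^4 * (10000 - 10000 * a)^5) + (937728083617241968935711035226142215784 * ((10000 * a - 2307)^5 * (10000 - 10000 * a)^4) + (907442661006649822223807356817428143856 * ((10000 * a - 2307)^6 * (10000 - 10000 * a)^3) + (618652102181362495238774581493183490224 * ((10000 * a - 2307)^7 * (10000 - 10000 * a)^2) + (268265248825340623809693645373295872556 * ((10000 * a - 2307)^8 * (10000 - 10000 * a)^1) + (63998360980593402645521516152588430284 * ((10000 * a - 2307)^9 * (10000 - 10000 * a)^0) + (154684104610502280478175723865834849636763750737681447881283616273188)))))))))).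
  assert (HX : 0 < X) by (unfold X; repeat (apply Rplus_le_lt_0_compat; [apply bt; lra|]); lra).
  assert (E : 94376005548116341767457997167435693000000000000000000000000000000000000 * P2 a = - X) by (unfold X, P2; ring).
  clearbody X. lra.
Qed.

Lemma dP2_sign (a : R) : 2306 <= 10000 * a -> 10000 * a <= 2307 -> dP2 a < 0.
Proof.
  intros H1 H2. pose (X := 1165175145215864319376853777380 * ((10000 * a - 2306)^0 * (2307 - 10000 * a)^8) + (8155678531068105133195405250336 * ((10000 * a - 2306)^1 * (2307 - 10000 * a)^7) + (24465393251854377526166522749168 * ((10000 * a - 2306)^2 * (2307 - 10000 * a)^6) + (40772918375779059024549983970784 * ((10000 * a - 2306)^3 * (2307 - 10000 * a)^5) + (40770181523379315770811965827800 * ((10000 * a - 2306)^4 * (2307 - 10000 * a)^4) + (24460466917518942135344943541472 * ((10000 * a - 2306)^5 * (2307 - 10000 * a)^3) + (8152941678641865989155795101488 * ((10000 * a - 2306)^6 * (2307 - 10000 * a)^2) + (1164627774725317312420804691552 * ((10000 * a - 2306)^7 * (2307 - 10000 * a)^1) + (2336861953322510099626871271153692))))))))).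
  assert (HX : 0 < X) by (unfold X; repeat (apply Rplus_le_lt_0_compat; [apply bt; lra|]); lra).
  assert (E : 100000000000000000000000000000000 * dP2 a = - X) by (unfold X, dP2; ring).
  clearbody X. lra.
Qed.

Lemma r1_2_sign (a : R) : 2306 <= 10000 * a -> 10000 * a <= 2307 -> 0 < r1_2 a.
Proof.
  intros H1 H2. pose (X := 3475147504950 * ((10000 * a - 2306)^0 * (2307 - 10000 * a)^4) + (10424507164440 * ((10000 * a - 2306)^1 * (2307 - 10000 * a)^3) + (10423571921780 * ((10000 * a - 2306)^2 * (2307 - 10000 * a)^2) + (3474212262280 * ((10000 * a - 2306)^3 * (2307 - 10000 * a)^1) + (25402075655580010))))).
  assert (HX : 0 < X) by (unfold X; repeat (apply Rplus_le_lt_0_compat; [apply bt; lra|]); lra).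
  assert (E : 10000000000000000 * r1_2 a =  X) by (unfold X, r1_2; ring).
  clearbody X. lra.
Qed.

Lemma r0_2_sign (a : R) : 2306 <= 10000 * a -> 10000 * a <= 2307 -> r0_2 a < 0.
Proof.
  intros H1 H2. pose (X := 22181242527866938 * ((10000 * a - 2306)^0 * (2307 - 10000 * a)^5) + (88718237854899650 * ((10000 * a - 2306)^1 * (2307 - 10000 * a)^4) + (133067258706621540 * ((10000 * a - 2306)^2 * (2307 - 10000 * a)^3) + (88704773959968820 * ((10000 * a - 2306)^3 * (2307 - 10000 * a)^2) + (22174510580379990 * ((10000 * a - 2306)^4 * (2307 - 10000 * a)^1) + (108132657329564676614)))))).
  assert (HX : 0 < X) by (unfold X; repeat (apply Rplus_le_lt_0_compat; [apply bt; lra|]); lra).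
  assert (E : 100000000000000000000 * r0_2 a = - X) by (unfold X, r0_2; ring).
  clearbody X. lra.
Qed.

Definition N2_2 (a : R) : R := (2 + a * ((-8) + a * (20 + a * ((-34) + a * (28 + a * ((-12))))))).

Lemma N2_2_sign (a : R) : 2306 <= 10000 * a -> 10000 * a <= 2307 -> 0 < N2_2 a.
Proof.
  intros H1 H2. pose (X := 29958618030798372 * ((10000 * a - 2306)^0 * (2307 - 10000 * a)^5) + (119830532646202100 * ((10000 * a - 2306)^1 * (2307 - 10000 * a)^4) + (179739891209070760 * ((10000 * a - 2306)^2 * (2307 - 10000 * a)^3) + (119822656602587080 * ((10000 * a - 2306)^3 * (2307 - 10000 * a)^2) + (29954680008920060 * ((10000 * a - 2306)^4 * (2307 - 10000 * a)^1) + (87285510688812340316)))))).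
  assert (HX : 0 < X) by (unfold X; repeat (apply Rplus_le_lt_0_compat; [apply bt; lra|]); lra).
  assert (E : 100000000000000000000 * N2_2 a =  X) by (unfold X, N2_2; ring).
  clearbody X. lra.
Qed.

Lemma N2_2_id a : N2_2 a = (1 - a) * r1_2 a + r0_2 a.
Proof. unfold N2_2, r1_2, r0_2. ring. Qed.

Lemma Ntr2_sign (a : R) : 2306 <= 10000 * a -> 10000 * a <= 2307 -> 0 < Ntr2 a.
Proof.
  intros H1 H2. pose (X := 776031172172892971620446971467131862682937652903324580496 * ((10000 * a - 2306)^0 * (2307 - 10000 * a)^15) + (10864482904743037223048421804425717906138935892247579012720 * ((10000 * a - 2306)^1 * (2307 - 10000 * a)^14) + (70619441060235408550031273843392962986151548067727863334160 * ((10000 * a - 2306)^2 * (2307 - 10000 * a)^13) + (282478972823834629873092404551094115331639475839566781666800 * ((10000 * a - 2306)^3 * (2307 - 10000 * a)^12) + (776820498498086736326912609943806144977001370752947513983440 * ((10000 * a - 2306)^4 * (2307 - 10000 * a)^11) + (1553647642720612715963046988230291193491391753845740279232304 * ((10000 * a - 2306)^5 * (2307 - 10000 * a)^10) + (2330481431556889318038237752075636144157370514349606171726160 * ((10000 * a - 2306)^6 * (2307 - 10000 * a)^9) + (2663418740482797646220281205440038899738252766762567079764400 * ((10000 * a - 2306)^7 * (2307 - 10000 * a)^8) + (2330501363177871912830293735496737911513185386454434987542960 * ((10000 * a - 2306)^8 * (2307 - 10000 * a)^7) + (1553674218215625452912122359740737248549380440225446335151440 * ((10000 * a - 2306)^9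 * (2307 - 10000 * a)^6) + (776840430119807885574244861284179594256735234485192821876016 * ((10000 * a - 2306)^10 * (2307 - 10000 * a)^5) + (282488636640740028371296221574847351827684107419223035630800 * ((10000 * a - 2306)^11 * (2307 - 10000 * a)^4) + (70622461003144235547443849905917385889498347460412161844080 * ((10000 * a - 2306)^12 * (2307 - 10000 * a)^3) + (10865040432693072764181488592695683577317401698924975877840 * ((10000 * a - 2306)^13 * (2307 - 10000 * a)^2) + (776077632838193488284560412992934779179542460491221449680 * ((10000 * a - 2306)^14 * (2307 - 10000 * a)^1) + (1076221957562547952899655603693458674256354191075213267535216)))))))))))))))).
  assert (HX : 0 < X) by (unfold X; repeat (apply Rplus_le_lt_0_compat; [apply bt; lra|]); lra).
  assert (E : 1000000000000000000000000000000000000000000000000000000000000 * Ntr2 a =  X) by (unfold X, Ntr2; ring).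
  clearbody X. lra.
Qed.

Lemma Ndet2_sign (a : R) : 2306 <= 10000 * a -> 10000 * a <= 2307 -> 0 < Ndet2 a.
Proof.
  intros H1 H2. pose (X := 44635221398881162029311154363385620816491608441656786325143346759540763133851713401144622106243504821550576511615336960 * ((10000 * a - 2306)^0 * (2307 - 10000 * a)^30) + (1294398140556478085360989943946224937788851466798121866109322172267184644219460919300377439130086134520694890465759411200 * ((10000 * a - 2306)^1 * (2307 - 10000 * a)^29) + (18121248055240716497393244038919926957596210415728376406531149388717135486768423739292364743347771562576904435223677888000 * ((10000 * a - 2306)^2 * (2307 - 10000 * a)^28) + (163088299352661411946004976537849822631576583880883727073777573318607628044451571690163966823639057524450711597038958131200 * ((10000 * a - 2306)^3 * (2307 - 10000 * a)^27) + (1060054880797900947752758179344980476444374629134231457386792444322391931789558913999200521186854869919256045826506289420800 * ((10000 * a - 2306)^4 * (2307 - 10000 * a)^26) + (5300179081241904165267653927716105411757249167789950061128257676268693623944982034496699112646230296121596662914376360023040 * ((10000 * a - 2306)^5 * (2307 - 10000 * a)^25) + (21200335042874648813072453477381046537660344971388711112051415497562708018941142626011055294133101338554819270077231687360000 * ((10000 * a - 2306)^6 * (2307 - 10000 * a)^24) + (69656990957516673353128862469801844514030023659716589777954024305075325992343144296361253907037036449494085866159639154176000 * ((10000 * a - 2306)^7 * (2307 - 10000 * a)^23) + (191553280137902419898206822825758256159566407684816982266229131313568221616732679264941310370866459665555422624461502992448000 * ((10000 * a - 2306)^8 * (2307 - 10000 * a)^22) + (446949615520392126690681053295002743797013270616152876734186339231003018252257683106508653197511861385734390212545733794176000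 * ((10000 * a - 2306)^9 * (2307 - 10000 * a)^21) + (893883155146510796427815951150276476755524456304017469213670656563940235645463293227630062333116379317288243028136339826880000 * ((10000 * a - 2306)^10 * (2307 - 10000 * a)^20) + (1543952228447302276270816190598974553842759268924367116366960375695489070488104832508495097413182923897201835843186904591616000 * ((10000 * a - 2306)^11 * (2307 - 10000 * a)^19) + (2315886693434271551882249127342171860106811142068515560322415662882481577898660913382973318987671864988272111342498182494016000 * ((10000 * a - 2306)^12 * (2307 - 10000 * a)^18) + (3028412751375547848507472900469194751651179448403871822441877161767393561943195855265649303530962044978430630802158384761984000 * ((10000 * a - 2306)^13 * (2307 - 10000 * a)^17) + (3460980902321273614542284620423541062058028613937454612738791061159098249424719621295359983336512882522907027074491075974080000 * ((10000 * a - 2306)^14 * (2307 - 10000 * a)^16) + (3460918661665887889323751815717554020591574275197273133392090681038674721181564931417652529791168991145202368903920243796582400 * ((10000 * a - 2306)^15 * (2307 - 10000 * a)^15) + (3028249369655142037845641519479306158201992685438103034482803448056755934989041493220406668009992431018398599242168853517248000 * ((10000 * a - 2306)^16 * (2307 - 10000 * a)^14) + (2315678461829786172505354011269946329708794163890885622222443915470565893904747003463202398176320322355393146873914513345664000 * ((10000 * a - 2306)^17 * (2307 - 10000 * a)^13) + (1543757878949717347337525026839209226433146475066789100109614251212631371064975825162199894952952747071661986500998189709120000 * ((10000 * a - 2306)^18 * (2307 - 10000 * a)^12) + (893738488979070797598774456474462474877082813803757464148863380853916523743349697688843817240573656368723263001041838075136000 * ((10000 * a - 2306)^19 * (2307 -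 10000 * a)^11) + (446861208418018220411070221809791653708809272716621895799086548733349942025416536560812195196433582375502349010625932644134400 * ((10000 * a - 2306)^20 * (2307 - 10000 * a)^10) + (191508502514592066752230110085957951957799193282387307291880174543774499034712175319278393914917262958401469188134874519936000 * ((10000 * a - 2306)^21 * (2307 - 10000 * a)^9) + (69638203143525585273517975247524431530200035272756041257105992751236368145138500446779014363160385930157689607942015717440000 * ((10000 * a - 2306)^22 * (2307 - 10000 * a)^8) + (21193854608477718740200693171438734706498135301771305659385872265974906896345059754462205584037453234362257775774669590016000 * ((10000 * a - 2306)^23 * (2307 - 10000 * a)^7) + (5298368371629173712745460456137405097755643872864630580016116756715706427913726252771859479964349747339933921145935099584000 * ((10000 * a - 2306)^24 * (2307 - 10000 * a)^6) + (1059654618672533702374357730977534771221631389255643085259699908338210999502201653017201767804909645159176694664718438487040 * ((10000 * a - 2306)^25 * (2307 - 10000 * a)^5) + (163020855917534832731938972203662954986840128942233724123500092470423110702013580829162515682686083505561144488236843072000 * ((10000 * a - 2306)^26 * (2307 - 10000 * a)^4) + (18113102712823187511626078376396871346076016671118788562932674858789186126761050604372842100442522932792027383451008563200 * ((10000 * a - 2306)^27 * (2307 - 10000 * a)^3) + (1293769785569068946987602145105978503491204132337132743639515314377863453050690143159762244272123824196950530188960345600 * ((10000 * a - 2306)^28 * (2307 - 10000 * a)^2) + (44611948991903625189104099370563383280908313378409698370945358894780315258309128187810757546687138608960115074919859200 * ((10000 * a - 2306)^29 * (2307 - 10000 * a)^1) + (4898387941462492095089149273400406889234969497379795344660368636902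4909957552299287216436717967314866828642737308937387520))))))))))))))))))))))))))))))).
  assert (HX : 0 < X) by (unfold X; repeat (apply Rplus_le_lt_0_compat; [apply bt; lra|]); lra).
  assert (E : 1000000000000000000000000000000000000000000000000000000000000000000000000000000000000000000000000000000000000000000000000 * Ndet2 a =  X) by (unfold X, Ndet2; ring).
  clearbody X. lra.
Qed.

Definition F3_0 (x0 x1 x2 : R) : R := (1 * x2^3 + 1 * x1 * x2^2 + 1 * x1^2 * x2 + (-1) * x1^3 + 1 * x0 * x2^2 + 2 * x0 * x1 * x2 + (-1) * x0 * x1^2 + 1 * x0^2 * x2 + (-1) * x0^2 * x1).

Lemma IBR3_0 x : IBR Game3 x 0%nat = x 0%nat * F3_0 (x 0%nat) (x 1%nat) (x 2%nat).
Proof. unfold IBR, F3_0. simpl sum_f_R0. unfold Game3. cmp_simpl. ring. Qed.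

Definition F3_1 (x0 x1 x2 : R) : R := ((-1) * x2^3 + (-1) * x1 * x2^2 + (-1) * x1^2 * x2 + (-1) * x0 * x2^2 + 1 * x0 * x1^2 + (-1) * x0^2 * x2 + 1 * x0^2 * x1 + 1 * x0^3).

Lemma IBR3_1 x : IBR Game3 x 1%nat = x 1%nat * F3_1 (x 0%nat) (x 1%nat) (x 2%nat).
Proof. unfold IBR, F3_1. simpl sum_f_R0. unfold Game3. cmp_simpl. ring. Qed.

Definition F3_2 (x0 x1 x2 : R) : R := (1 * x1 * x2^2 + 1 * x1^2 * x2 + 1 * x1^3 + (-1) * x0 * x2^2 + (-1) * x0 * x1^2 + (-1) * x0^2 * x2 + (-1) * x0^2 * x1 + (-1) * x0^3).

Lemma IBR3_2 x : IBR Game3 x 2%nat = x 2%nat * F3_2 (x 0%nat) (x 1%nat) (x 2%nat).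
Proof. unfold IBR, F3_2. simpl sum_f_R0. unfold Game3. cmp_simpl. ring. Qed.

Lemma Fsum3 x0 x1 x2 : x0 * (F3_0 x0 x1 x2) + x1 * (F3_1 x0 x1 x2) + x2 * (F3_2 x0 x1 x2) = 0.
Proof. unfold F3_0, F3_1, F3_2. ring. Qed.

Definition P3 (a : R) : R := ((-16) + a * (32 + a * (96 + a * ((-176) + a * (256 + a * (256 + a * ((-752) + a * (1248 + a * ((-864) + a * (432)))))))))).

Definition dP3 (a : R) : R := (32 + a * (192 + a * ((-528) + a * (1024 + a * (1280 + a * ((-4512) + a * (8736 + a * ((-6912) + a * (3888))))))))).

Lemma P3_deriv c : derivable_pt_lim P3 c (dP3 c).
Proof. apply is_derive_Reals. unfold P3, dP3. auto_derive; [trivial|ring]. Qed.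
Lemma P3_derivable : derivable P3.
Proof. intro c. exists (dP3 c). apply P3_deriv. Qed.

Definition r1_3 (a : R) : R := ((-4) + a * ((-8) + a * ((-8) + a * ((-12))))).

Definition r0_3 (a : R) : R := (4 + a * (0 + a * ((-8) + a * (12 + a * ((-24)))))).

Definition e2_3 (a : R) : R := ((-2)).

Lemma U3 a w : 1 * a^0 * P3 a = (16 + 32 * w^2 + 64 * a + 64 * a * w^2 + 64 * a^2 * w^2 + (-32) * a^3 + 128 * a^3 * w + 96 * a^3 * w^2 + 256 * a^4 + (-192) * a^5 + 144 * a^6) * ((F3_0 a w (1 - a - w)) + 2 * (F3_1 a w (1 - a - w))) + ((-32) * w + 64 * a + (-64) * a * w + 128 * a^2 + (-64) * a^2 * w + (-96) * a^3 * w + 192 * a^4) * ((F3_0 a w (1 - a - w))).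
Proof. unfold P3, F3_0, F3_1, F3_2. ring. Qed.

Lemma V3 a w : 1 * (r1_3 a * w + r0_3 a) = ((-4) * w + (-8) * a) * ((F3_0 a w (1 - a - w)) + 2 * (F3_1 a w (1 - a - w))) + (4) * ((F3_0 a w (1 - a - w))).
Proof. unfold r1_3, r0_3, F3_0, F3_1, F3_2. ring. Qed.

Lemma X3 a w : 1 * (r1_3 a)^2 * ((F3_0 a w (1 - a - w)) + 2 * (F3_1 a w (1 - a - w))) = (1) * P3 a + (8 * w + (-16) * a + 16 * a * w + (-32) * a^2 + 16 * a^2 * w + 24 * a^3 * w + (-48) * a^4) * (r1_3 a * w + r0_3 a).
Proof. unfold P3, r1_3, r0_3, F3_0, F3_1, F3_2. ring. Qed.

Lemma Y3 a w : 1 * (e2_3 a)^2 * ((F3_0 a w (1 - a - w))) = (4 * w + 8 * a) * ((F3_0 a w (1 - a - w)) + 2 * (F3_1 a w (1 - a - w))) + (1) * (r1_3 a * w + r0_3 a).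
Proof. unfold e2_3, r1_3, r0_3, F3_0, F3_1, F3_2. ring. Qed.

Definition J11_3 (t c : R) : R := (1 + (-2) * c + 2 * c^2 + (-2) * c^3 + (-4) * t + 8 * t * c + (-8) * t * c^2 + 6 * t^2 + (-12) * t^2 * c + (-4) * t^3).

Definition J12_3 (t c : R) : R := ((-2) * t + 4 * t * c + (-6) * t * c^2 + 4 * t^2 + (-8) * t^2 * c + (-4) * t^3).

Definition J21_3 (t c : R) : R := (2 * c + (-2) * c^2 + 2 * c^3 + (-4) * t * c + 4 * t * c^2 + 6 * t^2 * c).

Definition J22_3 (t c : R) : R := ((-1) + 4 * c + (-6) * c^2 + 4 * c^3 + 2 * t + (-4) * t * c + 6 * t * c^2 + (-2) * t^2 + 4 * t^2 * c + 2 * t^3).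

Definition Ntr3 (a : R) : R := (0 + a * (0 + a * ((-256) + a * ((-896) + a * (1280 + a * (3072 + a * ((-2432) + a * (11264 + a * (5376 + a * ((-13952) + a * (31488 + a * ((-27648) + a * (17280))))))))))))).

Lemma Ntr3_id a w : 1 * (r1_3 a)^3 * (J11_3 a w + J22_3 a w) = (1) * Ntr3 a + ((-32) * w + 32 * w^2 + 32 * a + (-224) * a * w + 128 * a * w^2 + 192 * a^2 + (-640) * a^2 * w + 256 * a^2 * w^2 + 512 * a^3 + (-1088) * a^3 * w + 448 * a^3 * w^2 + 320 * a^4 + (-1600) * a^4 * w + 512 * a^4 * w^2 + 128 * a^5 + (-1664) * a^5 * w + 384 * a^5 * w^2 + 640 * a^6 + (-1056) * a^6 * w + 288 * a^6 * w^2 + (-864) * a^7 + (-864) * a^7 * w + 576 * a^8) * (r1_3 a * w + r0_3 a).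
Proof. unfold Ntr3, r1_3, r0_3, J11_3, J12_3, J21_3, J22_3. ring. Qed.

Definition Ndet3 (a : R) : R := ((-4096) + a * (16384 + a * (131072 + a * (98304 + a * (638976 + a * (2752512 + a * (86016 + a * (4259840 + a * (19628032 + a * ((-20045824) + a * (26984448 + a * (75448320 + a * ((-202371072) + a * (190791680 + a * ((-35192832) + a * ((-844939264) + a * (900022272 + a * ((-1421377536) + a * ((-698273792) + a * (1366523904 + a * ((-3794042880) + a * (2865438720 + a * ((-2881142784) + a * (1015234560 + a * ((-597196800)))))))))))))))))))))))))).

Lemma Ndet3_id a w : 1 * (r1_3 a)^6 * (J11_3 a w * J22_3 a w - J12_3 a w * J21_3 a w) = (1) * Ndet3 a + (6144 * w + (-10240) * w^2 + 16384 * w^3 + (-12288) * w^4 + 8192 * w^5 + (-10240) * a + 34816 * a * w + (-77824) * a * w^2 + 122880 * a * w^3 + (-106496) * a * w^4 + 81920 * a * w^5 + (-49152) * a^2 + 102400 * a^2 * w + (-278528) * a^2 * w^2 + 442368 * a^2 * w^3 + (-450560) * a^2 * w^4 + 409600 * a^2 * w^5 + (-77824) * a^3 + 292864 * a^3 * w + (-653312) * a^3 * w^2 + 1130496 * a^3 * w^3 + (-1298432) * a^3 * w^4 + 1433600 * a^3 * w^5 + (-268288) * a^4 + 616448 * a^4 * w + (-1130496) * a^4 * w^2 + 2203648 * a^4 * w^3 + (-2768896) * a^4 * w^4 + 3932160 * a^4 * w^5 + (-741376) * a^5 + 1003520 * a^5 * w + (-1495040) * a^5 * w^2 + 3112960 *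 a^5 * w^3 + (-4259840) * a^5 * w^4 + 8781824 * a^5 * w^5 + (-458752) * a^6 + 2510848 * a^6 * w + (-1560576) * a^6 * w^2 + 3375104 * a^6 * w^3 + (-4120576) * a^6 * w^4 + 16465920 * a^6 * w^5 + (-1740800) * a^7 + 5468160 * a^7 * w + (-2121728) * a^7 * w^2 + 2932736 * a^7 * w^3 + 180224 * a^7 * w^4 + 26378240 * a^7 * w^5 + (-4227072) * a^8 + 10657792 * a^8 * w + (-5505024) * a^8 * w^2 + 2588672 * a^8 * w^3 + 10764288 * a^8 * w^4 + 36208640 * a^8 * w^5 + (-122880) * a^9 + 23654400 * a^9 * w + (-13135872) * a^9 * w^2 + 6258688 * a^9 * w^3 + 26697728 * a^9 * w^4 + 42844160 * a^9 * w^5 + (-10760192) * a^10 + 36851712 * a^10 * w + (-26771456) * a^10 * w^2 + 15417344 * a^10 * w^3 + 43745280 * a^10 * w^4 + 43515904 * a^10 * w^5 + (-14786560) * a^11 + 50929664 * a^11 * w + (-44179456) * a^11 * w^2 + 29032448 * a^11 * w^3 + 55115776 * a^11 * w^4 + 37355520 * a^11 * w^5 + 5177344 * a^12 + 73054208 * a^12 * w + (-55232512) * a^12 * w^2 + 44711936 * a^12 * w^3 + 55185408 * a^12 * w^4 + 26910720 * a^12 * w^5 + (-46123008) * a^13 + 66185216 * a^13 * w + (-61108224) * a^13 * w^2 + 50552832 * a^13 * w^3 + 44752896 * a^13 * w^4 + 15482880 * a^13 * w^5 + (-6504448) * a^14 + 71553024 * a^14 * w + (-53329920) * a^14 * w^2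 + 47038464 * a^14 * w^3 + 28090368 * a^14 * w^4 + 6635520 * a^14 * w^5 + 2232320 * a^15 + 68032512 * a^15 * w + (-35002368) * a^15 * w^2 + 34947072 * a^15 * w^3 + 12939264 * a^15 * w^4 + 1990656 * a^15 * w^5 + (-90126336) * a^16 + 27445248 * a^16 * w + (-24330240) * a^16 * w^2 + 16588800 * a^16 * w^3 + 3981312 * a^16 * w^4 + 68087808 * a^17 + 48992256 * a^17 * w + (-5640192) * a^17 * w^2 + 7962624 * a^17 * w^3 + (-92012544) * a^18 + 1990656 * a^18 * w + (-3981312) * a^18 * w^2 + 31850496 * a^19 + 13934592 * a^19 * w + (-23887872) * a^20) * (r1_3 a * w + r0_3 a).
Proof. unfold Ndet3, r1_3, r0_3, J11_3, J12_3, J21_3, J22_3. ring. Qed.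

Lemma P3_left (a : R) : 0 <= 10000 * a -> 10000 * a <= 3018 -> P3 a < 0.
Proof.
  intros H1 H2. pose (X := 15994199629922879969692475953051262976 * ((10000 * a - 0)^0 * (3018 - 10000 * a)^9) + (134290196669305919727232283577461366784 * ((10000 * a - 0)^1 * (3018 - 10000 * a)^8) + (489786395637223678908929134309845467136 * ((10000 * a - 0)^2 * (3018 - 10000 * a)^7) + (1016730081875953917454167980056306089984 * ((10000 * a - 0)^3 * (3018 - 10000 * a)^6) + (1317724226892997090581251970084459134976 * ((10000 * a - 0)^4 * (3018 - 10000 * a)^5) + (1094508172450845232487171970084459134976 * ((10000 * a - 0)^5 * (3018 - 10000 * a)^4) + (570174697556530524967488428056306089984 * ((10000 * a - 0)^6 * (3018 - 10000 * a)^3) + (170661477677678543243399159116245467136 * ((10000 * a - 0)^7 * (3018 - 10000 * a)^2) + (22519382353770342081561458205158006784 * ((10000 * a - 0)^8 * (3018 - 10000 * a)^1) + (120483846023226896072269996767457913696386220771662264439597432832)))))))))).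
  assert (HX : 0 < X) by (unfold X; repeat (apply Rplus_le_lt_0_compat; [apply bt; lra|]); lra).
  assert (E : 20771751529869437389059662842368000000000000000000000000000000000000 * P3 a = - X) by (unfold X, P3; ring).
  clearbody X. lra.
Qed.

Lemma P3_right (a : R) : 3019 <= 10000 * a -> 10000 * a <= 10000 -> 0 < P3 a.
Proof.
  intros H1 H2. pose (X := 52104619556204341887814021202499019248 * ((10000 * a - 3019)^1 * (10000 - 10000 * a)^8) + (467665035321156477710340082810796716992 * ((10000 * a - 3019)^2 * (10000 - 10000 * a)^7) + (1890123207345522251322220753804392339648 * ((10000 * a - 3019)^3 * (10000 - 10000 * a)^6) + (4544588928251597175440355410706588509472 * ((10000 * a - 3019)^4 * (10000 - 10000 * a)^5) + (7158924996672251248520355410706588509472 * ((10000 * a - 3019)^5 * (10000 - 10000 * a)^4) + (7620444425279849095813570273804392339648 * ((10000 * a - 3019)^6 * (10000 - 10000 * a)^3) + (5410623761649034755348672974487596716992 * ((10000 * a - 3019)^7 * (10000 - 10000 * a)^2) + (2374065038732258688837168243621899179248 * ((10000 * a - 3019)^8 * (10000 - 10000 * a)^1) + (511998337636917632093018693735766575472 * ((10000 * a - 3019)^9 * (10000 - 10000 * a)^0) + (65461300280440837173799742534930673079183214030787347217811030100688)))))))))).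
  assert (HX : 0 < X) by (unfold X; repeat (apply Rplus_le_lt_0_compat; [apply bt; lra|]); lra).
  assert (E : 39378461284881461506129266187885221000000000000000000000000000000000000 * P3 a =  X) by (unfold X, P3; ring).
  clearbody X. lra.
Qed.

Lemma dP3_sign (a : R) : 3018 <= 10000 * a -> 10000 * a <= 3019 -> 0 < dP3 a.
Proof.
  intros H1 H2. pose (X := 2084594520898508531117800931328 * ((10000 * a - 3018)^1 * (3019 - 10000 * a)^7) + (14592825956780405996340163448832 * ((10000 * a - 3018)^2 * (3019 - 10000 * a)^6) + (43780470981867902100587691716608 * ((10000 * a - 3018)^3 * (3019 - 10000 * a)^5) + (72970773789101366164785840755200 * ((10000 * a - 3018)^4 * (3019 - 10000 * a)^4) + (72974096241886769062289002392576 * ((10000 * a - 3018)^5 * (3019 - 10000 * a)^3) + (43786451396893720412805187101952 * ((10000 * a - 3018)^6 * (3019 - 10000 * a)^2) + (14596148409585964055164670389504 * ((10000 * a - 3018)^7 * (3019 - 10000 * a)^1) + (2085259011463651175227974127920 * ((10000 * a - 3018)^8 * (3019 - 10000 * a)^0) + (7461690640745640186070728364863488))))))))).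
  assert (HX : 0 < X) by (unfold X; repeat (apply Rplus_le_lt_0_compat; [apply bt; lra|]); lra).
  assert (E : 100000000000000000000000000000000 * dP3 a =  X) by (unfold X, dP3; ring).
  clearbody X. lra.
Qed.

Lemma r1_3_sign (a : R) : 3018 <= 10000 * a -> 10000 * a <= 3019 -> r1_3 a < 0.
Proof.
  intros H1 H2. pose (X := 1610779664 * ((10000 * a - 3018)^1 * (3019 - 10000 * a)^2) + (3221747976 * ((10000 * a - 3018)^2 * (3019 - 10000 * a)^1) + (1610968324 * ((10000 * a - 3018)^3 * (3019 - 10000 * a)^0) + (7472932981984)))).
  assert (HX : 0 < X) by (unfold X; repeat (apply Rplus_le_lt_0_compat; [apply bt; lra|]); lra).
  assert (E : 1000000000000 * r1_3 a = - X) by (unfold X, r1_3; ring).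
  clearbody X. lra.
Qed.

Lemma r0_3_sign (a : R) : 3018 <= 10000 * a -> 10000 * a <= 3019 -> 0 < r0_3 a.
Proof.
  intros H1 H2. pose (X := 4189765144280 * ((10000 * a - 3018)^0 * (3019 - 10000 * a)^4) + (12570320721248 * ((10000 * a - 3018)^1 * (3019 - 10000 * a)^3) + (12571346179408 * ((10000 * a - 3018)^2 * (3019 - 10000 * a)^2) + (4190790602464 * ((10000 * a - 3018)^3 * (3019 - 10000 * a)^1) + (34016744068560296))))).
  assert (HX : 0 < X) by (unfold X; repeat (apply Rplus_le_lt_0_compat; [apply bt; lra|]); lra).
  assert (E : 10000000000000000 * r0_3 a =  X) by (unfold X, r0_3; ring).
  clearbody X. lra.
Qed.

Definition N2_3 (a : R) : R := (0 + a * ((-4) + a * ((-8) + a * (8 + a * ((-12)))))).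

Lemma N2_3_sign (a : R) : 3018 <= 10000 * a -> 10000 * a <= 3019 -> N2_3 a < 0.
Proof.
  intros H1 H2. pose (X := 7962270487936 * ((10000 * a - 3018)^1 * (3019 - 10000 * a)^3) + (23887542943136 * ((10000 * a - 3018)^2 * (3019 - 10000 * a)^2) + (23888274487328 * ((10000 * a - 3018)^3 * (3019 - 10000 * a)^1) + (7963002032140 * ((10000 * a - 3018)^4 * (3019 - 10000 * a)^0) + (18155084246507712))))).
  assert (HX : 0 < X) by (unfold X; repeat (apply Rplus_le_lt_0_compat; [apply bt; lra|]); lra).
  assert (E : 10000000000000000 * N2_3 a = - X) by (unfold X, N2_3; ring).
  clearbody X. lra.
Qed.

Lemma N2_3_id a : N2_3 a = (1 - a) * r1_3 a + r0_3 a.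
Proof. unfold N2_3, r1_3, r0_3. ring. Qed.

Lemma Ntr3_sign (a : R) : 3018 <= 10000 * a -> 10000 * a <= 3019 -> Ntr3 a < 0.
Proof.
  intros H1 H2. pose (X := 10194341417855528546333315510445238801772052480 * ((10000 * a - 3018)^1 * (3019 - 10000 * a)^11) + (112129369207457840935621737825752479704328437760 * ((10000 * a - 3018)^2 * (3019 - 10000 * a)^10) + (560604908216728551628386549636281643946534502400 * ((10000 * a - 3018)^3 * (3019 - 10000 * a)^9) + (1681688893559550802041751220245333890440900608000 * ((10000 * a - 3018)^4 * (3019 - 10000 * a)^8) + (3363126089676794777284619855596091898296240046080 * ((10000 * a - 3018)^5 * (3019 - 10000 * a)^7) + (4708024099758446912495401495643143715822851031040 * ((10000 * a - 3018)^6 * (3019 - 10000 * a)^6) + (4707671624595160288527437158459937902937007882240 * ((10000 * a - 3018)^7 * (3019 - 10000 * a)^5) + (3362370785752334146231407315131766808422494976000 * ((10000 * a - 3018)^8 * (3019 - 10000 * a)^4) + (1681059473617280024280802287085171939965916876800 * ((10000 * a - 3018)^9 * (3019 - 10000 * a)^3) + (560311178906681345672564858887484918385765032960 * ((10000 * a - 3018)^10 * (3019 - 10000 * a)^2) + (112053838812192841796318032311814240973982602240 * ((10000 * a - 3018)^11 * (3019 - 10000 * a)^1) + (10185949151540964687150570866261052145113859200 * ((10000 * a - 3018)^12 * (3019 - 10000 * a)^0) + (28670471098610817166602730528873196899755656478720))))))))))))).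
  assert (HX : 0 < X) by (unfold X; repeat (apply Rplus_le_lt_0_compat; [apply bt; lra|]); lra).
  assert (E : 1000000000000000000000000000000000000000000000000 * Ntr3 a = - X) by (unfold X, Ntr3; ring).
  clearbody X. lra.
Qed.

Lemma Ndet3_sign (a : R) : 3018 <= 10000 * a -> 10000 * a <= 3019 -> 0 < Ndet3 a.
Proof.
  intros H1 H2. pose (X := 36099535735722434215376602950900806886120430666194994960737553597164906539242081520368932723097600 * ((10000 * a - 3018)^1 * (3019 - 10000 * a)^23) + (830308427367505263953632992833566776342143368574200626023372044883352590831103954339297001839001600 * ((10000 * a - 3018)^2 * (3019 - 10000 * a)^22) + (9133602867885649260191384134275341091519386870246790617809633944444701854476712416492444518763724800 * ((10000 * a - 3018)^3 * (3019 - 10000 * a)^21) + (63936691291671132775708978320891554411434538521593447283960386878208835545945153300161536253231104000 * ((10000 * a - 3018)^4 * (3019 - 10000 * a)^20) + (319690812783572262666703051042419947317877747807770174577725860681111766012020626032414759853857177600 * ((10000 * a - 3018)^5 * (3019 - 10000 * a)^19) + (1214853043536294462429565125108430472954844850558292383064094013270408413154436946610328608460872089600 * ((10000 * a - 3018)^6 * (3019 - 10000 * a)^18) + (3644642998253835004004101033419891488079117249735847243185215151884740329864334537453438961160342732800 * ((10000 * a - 3018)^7 * (3019 - 10000 * a)^17) + (8851479538192937883272649025633134560350531494525701634062133954916003988605469679517295627309416448000 * ((10000 * a - 3018)^8 * (3019 - 10000 * a)^16) + (17703366460416816059585712768409841486039866468830752406859178405246743371955700259779722240742496665600 * ((10000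 * a - 3018)^9 * (3019 - 10000 * a)^15) + (29506289763162760228394837327996582554821342363766866087310566959395359139520622636205083759939787161600 * ((10000 * a - 3018)^10 * (3019 - 10000 * a)^14) + (41309756293934076256860004385698336168020903723800747221300697067892991662791368714908892751412907212800 * ((10000 * a - 3018)^11 * (3019 - 10000 * a)^13) + (48821744578248545381782037141039205099078072834571769840337252467644133733874509140956277137695834112000 * ((10000 * a - 3018)^12 * (3019 - 10000 * a)^12) + (48822868118940930914131069350589165376782320619806054603683591603675258581811864605141836476521748889600 * ((10000 * a - 3018)^13 * (3019 - 10000 * a)^11) + (41312608358769745745883385447861472983199241614600167162826495845635625049991178665342748191010429337600 * ((10000 * a - 3018)^14 * (3019 - 10000 * a)^10) + (29509685078446062878291641908364657257468289337103796794427012251333933786514531151498082575876672716800 * ((10000 * a - 3018)^15 * (3019 - 10000 * a)^9) + (17706218525258247390833425106135078754878536741333294523925395425034310160894020250933106197545353216000 * ((10000 * a - 3018)^16 * (3019 - 10000 * a)^8) + (8853313008451106972217911408947327194593812763059943034456309402708310966412759308706276912808958361600 * ((10000 * a - 3018)^17 * (3019 - 10000 * a)^7) + (3645565725117653507525273663228284478797675499403001165345438747730524640875734569797478126995478937600 * ((10000 * a - 3018)^18 * (3019 - 10000 * a)^6) + (1215216541998679944320130824020707916033619062605280537345668539410359008211781395658639039719066828800 * ((10000 * a - 3018)^19 * (3019 - 10000 * a)^5) + (319801186810924562860772118730932172350143891459998218208953180060961327311070703040391327080120320000 * ((10000 * a - 3018)^20 * (3019 - 10000 * a)^4) + (63961709404618522113939696174005071463167020575198515335076979385609778756908146690122494733949337600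 * ((10000 * a - 3018)^21 * (3019 - 10000 * a)^3) + (9137597356522026992039627246895004188081817295751497242696958146802229477916211811729425903491481600 * ((10000 * a - 3018)^22 * (3019 - 10000 * a)^2) + (830709787471346719759565369914162853978170234971601985841933433113372565837828262525445431905484800 * ((10000 * a - 3018)^23 * (3019 - 10000 * a)^1) + (36118648121704591733558479751108745109881456264958536076256392993619816387467161025236516941824000 * ((10000 * a - 3018)^24 * (3019 - 10000 * a)^0) + (29869279631714644926468177462084994988847806139405497767702129499011114488057869496554313621910323200))))))))))))))))))))))))).
  assert (HX : 0 < X) by (unfold X; repeat (apply Rplus_le_lt_0_compat; [apply bt; lra|]); lra).
  assert (E : 1000000000000000000000000000000000000000000000000000000000000000000000000000000000000000000000000 * Ndet3 a =  X) by (unfold X, Ndet3; ring).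
  clearbody X. lra.
Qed.
Definition F1_0 (x0 x1 x2 : R) : R := (1 * x2^3 + 1 * x1 * x2^2 + (-1) * x1^2 * x2 + (-1) * x1^3 + 1 * x0 * x2^2 + (-1) * x0 * x1^2 + 1 * x0^2 * x2 + (-1) * x0^2 * x1).

Lemma IBR1_0 x : IBR Game1 x 0%nat = x 0%nat * F1_0 (x 0%nat) (x 1%nat) (x 2%nat).
Proof. unfold IBR, F1_0. simpl sum_f_R0. unfold Game1. cmp_simpl. ring. Qed.

Definition F1_1 (x0 x1 x2 : R) : R := ((-1) * x2^3 + (-1) * x1 * x2^2 + (-1) * x1^2 * x2 + (-1) * x0 * x2^2 + 2 * x0 * x1 * x2 + 1 * x0 * x1^2 + (-1) * x0^2 * x2 + 1 * x0^2 * x1 + 1 * x0^3).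

Lemma IBR1_1 x : IBR Game1 x 1%nat = x 1%nat * F1_1 (x 0%nat) (x 1%nat) (x 2%nat).
Proof. unfold IBR, F1_1. simpl sum_f_R0. unfold Game1. cmp_simpl. ring. Qed.

Definition F1_2 (x0 x1 x2 : R) : R := (1 * x1 * x2^2 + 1 * x1^2 * x2 + 1 * x1^3 + (-1) * x0 * x2^2 + (-1) * x0 * x1^2 + (-1) * x0^2 * x2 + 1 * x0^2 * x1 + (-1) * x0^3).

Lemma IBR1_2 x : IBR Game1 x 2%nat = x 2%nat * F1_2 (x 0%nat) (x 1%nat) (x 2%nat).
Proof. unfold IBR, F1_2. simpl sum_f_R0. unfold Game1. cmp_simpl. ring. Qed.

Definition J11_1 (t c : R) : R := (1 + (-2) * c + (-4) * t + 4 * t * c + 6 * t^2 + (-6) * t^2 * c + (-4) * t^3).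

Definition J12_1 (t c : R) : R := ((-2) * t + 2 * t^2 + (-2) * t^3).

Definition J21_1 (t c : R) : R := (2 * c + (-4) * t * c + 6 * t^2 * c).

Definition J22_1 (t c : R) : R := ((-1) + 4 * c + (-6) * c^2 + 4 * c^3 + 2 * t + (-2) * t^2 + 2 * t^3).

Lemma pz0 k e : k <> 0 -> k * e = 0 -> e = 0.
Proof. intros Hk H. destruct (Rmult_integral _ _ H); [contradiction|assumption]. Qed.

Lemma sign_helper K r T A N : 0 < K -> 0 < A -> K * r * T = A * N -> 0 < r * N -> 0 < T.
Proof.
  intros HK HA HE HrN.
  assert (H1 : K * (r * r * T) = A * (r * N)) by (replace (K * (r * r * T)) with (r * (K * r * T)) by ring; rewrite HE; ring).
  assert (H2 : 0 < K * (r * r * T)) by (rewrite H1; apply Rmult_lt_0_compat; auto).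
  assert (H3 : 0 < r * r * T) by nra.
  destruct (Req_dec r 0) as [Hr|Hr]; [subst r; lra|].
  nra.
Qed.

Lemma eig_pos J11 J12 J21 J22 : 0 < J11 + J22 -> 0 < J11*J22 - J12*J21 ->
  forall l, is_eigenvalue2 J11 J12 J21 J22 l -> 0 < fst l.
Proof.
  intros Ht Hd [a b] H. unfold is_eigenvalue2, Csub, Cmul, Creal in H. simpl in H.
  injection H as H1 H2. simpl.
  assert (Hb : b * (J11 + J22 - 2 * a) = 0) by nra.
  destruct (Rmult_integral _ _ Hb) as [Hb0|Hb0].
  - subst b. nra.
  - lra.
Qed.

Lemma D1_11 t0 c : derivable_pt_lim (fun t => IBR Game1 (chart t c) 0%nat) t0 (J11_1 t0 c).
Proof. apply is_derive_Reals. apply (is_derive_ext (fun t => t * F1_0 t c (1 - t - c))).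
  { intro t. rewrite IBR1_0. reflexivity. } unfold F1_0, J11_1. auto_derive; [trivial|ring]. Qed.
Lemma D1_12 t0 c : derivable_pt_lim (fun t => IBR Game1 (chart c t) 0%nat) t0 (J12_1 c t0).
Proof. apply is_derive_Reals. apply (is_derive_ext (fun t => c * F1_0 c t (1 - c - t))).
  { intro t. rewrite IBR1_0. reflexivity. } unfold F1_0, J12_1. auto_derive; [trivial|ring]. Qed.
Lemma D1_21 t0 c : derivable_pt_lim (fun t => IBR Game1 (chart t c) 1%nat) t0 (J21_1 t0 c).
Proof. apply is_derive_Reals. apply (is_derive_ext (fun t => c * F1_1 t c (1 - t - c))).
  { intro t. rewrite IBR1_1. reflexivity. } unfold F1_1, J21_1. auto_derive; [trivial|ring]. Qed.
Lemma D1_22 t0 c : derivable_pt_lim (fun t => IBR Game1 (chart c t) 1%nat) t0 (J22_1 c t0).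
Proof. apply is_derive_Reals. apply (is_derive_ext (fun t => t * F1_1 c t (1 - c - t))).
  { intro t. rewrite IBR1_1. reflexivity. } unfold F1_1, J22_1. auto_derive; [trivial|ring]. Qed.

Lemma jac1 : is_jacobian Game1 (fun _ => 1/3) (-7/27) (-14/27) (4/9) (1/3).
Proof.
  unfold is_jacobian. split; [|split; [|split]].
  - pose proof (D1_11 (1/3) (1/3)) as H. replace (J11_1 (1/3) (1/3)) with (-7/27) in H by (unfold J11_1; field). exact H.
  - pose proof (D1_12 (1/3) (1/3)) as H. replace (J12_1 (1/3) (1/3)) with (-14/27) in H by (unfold J12_1; field). exact H.
  - pose proof (D1_21 (1/3) (1/3)) as H. replace (J21_1 (1/3) (1/3)) with (4/9) in H by (unfold J21_1; field). exact H.
  - pose proof (D1_22 (1/3) (1/3)) as H. replace (J22_1 (1/3) (1/3)) with (1/3) in H by (unfold J22_1; field). exact H.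
Qed.

Lemma interior1 : Defs.interior (fun _ => 1/3).
Proof. unfold Defs.interior. repeat split; lra. Qed.

Lemma rest1 : rest_point Game1 (fun _ => 1/3).
Proof.
  intros i Hi. destruct i as [|[|[|i]]];
    [rewrite IBR1_0; unfold F1_0 | rewrite IBR1_1; unfold F1_1 | rewrite IBR1_2; unfold F1_2 | lia];
    field.
Qed.

Lemma uniq1 y : Defs.interior y -> rest_point Game1 y -> forall i, (i < 3)%nat -> y i = 1/3.
Proof.
  intros [Hy0 [Hy1 [Hy2 Hs]]] Hr.
  assert (Ha0 : F1_0 (y 0%nat) (y 1%nat) (y 2%nat) = 0).
  { pose proof (Hr 0%nat ltac:(lia)) as H0. rewrite IBR1_0 in H0.
    apply (pz0 (y 0%nat)); [lra | exact H0]. }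
  assert (Ha1 : F1_1 (y 0%nat) (y 1%nat) (y 2%nat) = 0).
  { pose proof (Hr 1%nat ltac:(lia)) as H0. rewrite IBR1_1 in H0.
    apply (pz0 (y 1%nat)); [lra | exact H0]. }
  set (a := y 0%nat) in *. set (b := y 1%nat) in *. set (c := y 2%nat) in *.
  assert (Hf : (c - b) * (c^2 + 2*b*c + b^2 + a*b + a*c + a^2) = 0)
    by (rewrite <- Ha0; unfold F1_0; ring).
  assert (Hq : 0 < c^2 + 2*b*c + b^2 + a*b + a*c + a^2) by nra.
  assert (Hcb : c = b).
  { destruct (Rmult_integral _ _ Hf) as [h|h]; lra. }
  assert (Hg : (a - b) * (a^2 + a*b + 3*b^2) = 0)
    by (rewrite <- Ha1; rewrite Hcb; unfold F1_1; ring).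
  assert (Hab : a = b).
  { destruct (Rmult_integral _ _ Hg) as [h|h]; nra. }
  intros i Hi. destruct i as [|[|[|i]]]; [ | | | lia].
  - change (a = 1/3). lra.
  - change (b = 1/3). lra.
  - change (c = 1/3). lra.
Qed.

Lemma eig1 l : is_eigenvalue2 (-7/27) (-14/27) (4/9) (1/3) l <->
  (l = (1/27, 2 * sqrt 26 / 27) \/ l = (1/27, - (2 * sqrt 26 / 27))).
Proof.
  assert (Hs : sqrt 26 * sqrt 26 = 26) by (apply sqrt_sqrt; lra).
  destruct l as [a b]. unfold is_eigenvalue2, Csub, Cmul, Creal; simpl. split.
  - intro H. injection H as H1 H2.
    assert (Hb : b * (2/27 - 2*a) = 0) by lra.
    destruct (Rmult_integral _ _ Hb) as [Hb0|Ha].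
    + subst b. exfalso. nra.
    + assert (Ha' : a = 1/27) by lra. subst a.
      assert (Hp : (b - 2 * sqrt 26 / 27) * (b + 2 * sqrt 26 / 27) = 0) by nra.
      destruct (Rmult_integral _ _ Hp) as [h|h]; [left|right]; f_equal; lra.
  - intros [H|H]; injection H as -> ->; f_equal; nra.
Qed.

Lemma game1 : exists p, unique_repelling_interior_rest Game1 p.
Proof.
  exists (fun _ => 1/3). split; [exact interior1|split; [exact rest1|split]].
  - intros y Hy Hr i Hi. apply (uniq1 y Hy Hr i Hi).
  - exists (-7/27), (-14/27), (4/9), (1/3). split; [exact jac1|].
    apply eig_pos; lra.
Qed.

Lemma P2_uniq a b : 2306 <= 10000*a -> 10000*a <= 2307 -> 2306 <= 10000*b -> 10000*b <= 2307 ->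
  P2 a = 0 -> P2 b = 0 -> a = b.
Proof.
  intros H1 H2 H3 H4 Ha Hb. destruct (Rtotal_order a b) as [Hab|[Hab|Hab]]; auto; exfalso.
  - destruct (MVT_cor2 P2 dP2 a b Hab (fun c _ => P2_deriv c)) as [c [Hc1 Hc2]].
    pose proof (dP2_sign c ltac:(lra) ltac:(lra)). rewrite Ha, Hb in Hc1. nra.
  - destruct (MVT_cor2 P2 dP2 b a Hab (fun c _ => P2_deriv c)) as [c [Hc1 Hc2]].
    pose proof (dP2_sign c ltac:(lra) ltac:(lra)). rewrite Ha, Hb in Hc1. nra.
Qed.

Lemma D2_11 t0 c : derivable_pt_lim (fun t => IBR Game2 (chart t c) 0%nat) t0 (J11_2 t0 c).
Proof. apply is_derive_Reals. apply (is_derive_ext (fun t => t * F2_0 t c (1 - t - c))).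
  { intro t. rewrite IBR2_0. reflexivity. } unfold F2_0, J11_2. auto_derive; [trivial|ring]. Qed.
Lemma D2_12 t0 c : derivable_pt_lim (fun t => IBR Game2 (chart c t) 0%nat) t0 (J12_2 c t0).
Proof. apply is_derive_Reals. apply (is_derive_ext (fun t => c * F2_0 c t (1 - c - t))).
  { intro t. rewrite IBR2_0. reflexivity. } unfold F2_0, J12_2. auto_derive; [trivial|ring]. Qed.
Lemma D2_21 t0 c : derivable_pt_lim (fun t => IBR Game2 (chart t c) 1%nat) t0 (J21_2 t0 c).
Proof. apply is_derive_Reals. apply (is_derive_ext (fun t => c * F2_1 t c (1 - t - c))).
  { intro t. rewrite IBR2_1. reflexivity. } unfold F2_1, J21_2. auto_derive; [trivial|ring]. Qed.
Lemma D2_22 t0 c : derivable_pt_lim (fun t => IBR Game2 (chart c t) 1%nat) t0 (J22_2 c t0).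
Proof. apply is_derive_Reals. apply (is_derive_ext (fun t => t * F2_1 c t (1 - c - t))).
  { intro t. rewrite IBR2_1. reflexivity. } unfold F2_1, J22_2. auto_derive; [trivial|ring]. Qed.

Lemma game2 : exists p, unique_repelling_interior_rest Game2 p.
Proof.
  assert (Hc : continuity (fun a => - P2 a)).
  { apply continuity_opp. apply derivable_continuous. apply P2_derivable. }
  destruct (IVT (fun a => - P2 a) (2306/10000) (2307/10000) Hc) as [z [[Hz1 Hz2] Hz]].
  { lra. } { unfold P2; lra. } { unfold P2; lra. }
  assert (HP : P2 z = 0) by lra.
  assert (Hl : 2306 <= 10000 * z) by lra. assert (Hh : 10000 * z <= 2307) by lra.
  pose proof (r1_2_sign z Hl Hh) as Hr1. pose proof (r0_2_sign z Hl Hh) as Hr0.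
  pose proof (N2_2_sign z Hl Hh) as HN2. rewrite N2_2_id in HN2.
  pose proof (Ntr2_sign z Hl Hh) as HNt. pose proof (Ndet2_sign z Hl Hh) as HNd.
  set (w := - r0_2 z / r1_2 z).
  assert (HR : r1_2 z * w + r0_2 z = 0) by (unfold w; field; lra).
  assert (Hw : 0 < w) by nra.
  assert (Hx2 : 0 < 1 - z - w) by nra.
  assert (HE : F2_0 z w (1 - z - w) = 0).
  { pose proof (X2 z w) as HX. rewrite HP, HR in HX.
    apply (pz0 (1 * r1_2 z ^ 2)); [nra | lra]. }
  assert (HH : F2_2 z w (1 - z - w) = 0).
  { pose proof (Y2 z w) as HX. rewrite HE, HR in HX.
    apply (pz0 (1 * e2_2 z ^ 2)); [unfold e2_2; nra | lra]. }
  assert (HF1 : F2_1 z w (1 - z - w) = 0).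
  { pose proof (Fsum2 z w (1 - z - w)) as HS. rewrite HE, HH in HS.
    apply (pz0 w); [lra | lra]. }
  exists (chart z w). split; [|split; [|split]].
  - unfold interior, chart. repeat split; lra.
  - intros i Hi. destruct i as [|[|[|i]]];
      [rewrite IBR2_0 | rewrite IBR2_1 | rewrite IBR2_2 | lia];
      cbv beta iota delta [chart]; [rewrite HE | rewrite HF1 | rewrite HH]; ring.
  - intros y [Hy0 [Hy1 [Hy2 Hs]]] Hr.
    assert (Ha0 : F2_0 (y 0%nat) (y 1%nat) (y 2%nat) = 0).
    { pose proof (Hr 0%nat ltac:(lia)) as H0. rewrite IBR2_0 in H0.
      apply (pz0 (y 0%nat)); [lra | exact H0]. }
    assert (Ha2 : F2_2 (y 0%nat) (y 1%nat) (y 2%nat) = 0).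
    { pose proof (Hr 2%nat ltac:(lia)) as H0. rewrite IBR2_2 in H0.
      apply (pz0 (y 2%nat)); [lra | exact H0]. }
    assert (Hy2e : y 2%nat = 1 - y 0%nat - y 1%nat) by lra.
    rewrite Hy2e in Ha0, Ha2.
    assert (HPa : 1 * y 0%nat ^ 2 * P2 (y 0%nat) = 0).
    { rewrite (U2 (y 0%nat) (y 1%nat)), Ha0, Ha2. ring. }
    assert (HPa' : P2 (y 0%nat) = 0).
    { apply (pz0 (1 * y 0%nat ^ 2)); [nra | exact HPa]. }
    assert (Hin1 : 2306 <= 10000 * y 0%nat).
    { destruct (Rle_lt_dec 2306 (10000 * y 0%nat)) as [h|h]; [exact h|].
      pose proof (P2_left (y 0%nat) ltac:(lra) ltac:(lra)). lra. }
    assert (Hin2 : 10000 * y 0%nat <= 2307).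
    { destruct (Rle_lt_dec (10000 * y 0%nat) 2307) as [h|h]; [exact h|].
      pose proof (P2_right (y 0%nat) ltac:(lra) ltac:(lra)). lra. }
    assert (Haz : y 0%nat = z) by (apply P2_uniq; assumption).
    assert (HRb : 1 * (r1_2 (y 0%nat) * y 1%nat + r0_2 (y 0%nat)) = 0).
    { rewrite (V2 (y 0%nat) (y 1%nat)), Ha0, Ha2. ring. }
    rewrite Haz in HRb.
    assert (Hbw : y 1%nat = w).
    { assert (Hq : - r0_2 z = r1_2 z * y 1%nat) by lra.
      unfold w. rewrite Hq. field. lra. }
    intros i Hi. destruct i as [|[|[|i]]]; cbv beta iota delta [chart];
      [exact Haz | exact Hbw | rewrite Hy2e, Haz, Hbw; ring | lia].
  - exists (J11_2 z w), (J12_2 z w), (J21_2 z w), (J22_2 z w). split.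
    + unfold is_jacobian. change (chart z w 0%nat) with z. change (chart z w 1%nat) with w.
      repeat split; [apply D2_11 | apply D2_12 | apply D2_21 | apply D2_22].
    + apply eig_pos.
      * pose proof (Ntr2_id z w) as HT. rewrite HR, Rmult_0_r, Rplus_0_r in HT.
        apply (sign_helper 1 (r1_2 z ^ 3) _ 1 (Ntr2 z)); try lra.
        apply Rmult_lt_0_compat; [apply pow_lt|]; lra.
      * pose proof (Ndet2_id z w) as HT. rewrite HR, Rmult_0_r, Rplus_0_r in HT.
        apply (sign_helper 1 (r1_2 z ^ 6) _ 1 (Ndet2 z)); try lra.
        apply Rmult_lt_0_compat; [apply pow_lt|]; lra.
Qed.

Lemma P3_uniq a b : 3018 <= 10000*a -> 10000*a <= 3019 -> 3018 <= 10000*b -> 10000*b <= 3019 ->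
  P3 a = 0 -> P3 b = 0 -> a = b.
Proof.
  intros H1 H2 H3 H4 Ha Hb. destruct (Rtotal_order a b) as [Hab|[Hab|Hab]]; auto; exfalso.
  - destruct (MVT_cor2 P3 dP3 a b Hab (fun c _ => P3_deriv c)) as [c [Hc1 Hc2]].
    pose proof (dP3_sign c ltac:(lra) ltac:(lra)). rewrite Ha, Hb in Hc1. nra.
  - destruct (MVT_cor2 P3 dP3 b a Hab (fun c _ => P3_deriv c)) as [c [Hc1 Hc2]].
    pose proof (dP3_sign c ltac:(lra) ltac:(lra)). rewrite Ha, Hb in Hc1. nra.
Qed.

Lemma D3_11 t0 c : derivable_pt_lim (fun t => IBR Game3 (chart t c) 0%nat) t0 (J11_3 t0 c).
Proof. apply is_derive_Reals. apply (is_derive_ext (fun t => t * F3_0 t c (1 - t - c))).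
  { intro t. rewrite IBR3_0. reflexivity. } unfold F3_0, J11_3. auto_derive; [trivial|ring]. Qed.
Lemma D3_12 t0 c : derivable_pt_lim (fun t => IBR Game3 (chart c t) 0%nat) t0 (J12_3 c t0).
Proof. apply is_derive_Reals. apply (is_derive_ext (fun t => c * F3_0 c t (1 - c - t))).
  { intro t. rewrite IBR3_0. reflexivity. } unfold F3_0, J12_3. auto_derive; [trivial|ring]. Qed.
Lemma D3_21 t0 c : derivable_pt_lim (fun t => IBR Game3 (chart t c) 1%nat) t0 (J21_3 t0 c).
Proof. apply is_derive_Reals. apply (is_derive_ext (fun t => c * F3_1 t c (1 - t - c))).
  { intro t. rewrite IBR3_1. reflexivity. } unfold F3_1, J21_3. auto_derive; [trivial|ring]. Qed.
Lemma D3_22 t0 c : derivable_pt_lim (fun t => IBR Game3 (chart c t) 1%nat) t0 (J22_3 c t0).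
Proof. apply is_derive_Reals. apply (is_derive_ext (fun t => t * F3_1 c t (1 - c - t))).
  { intro t. rewrite IBR3_1. reflexivity. } unfold F3_1, J22_3. auto_derive; [trivial|ring]. Qed.

Lemma game3 : exists p, unique_repelling_interior_rest Game3 p.
Proof.
  assert (Hc : continuity P3).
  { apply derivable_continuous. apply P3_derivable. }
  destruct (IVT P3 (3018/10000) (3019/10000) Hc) as [z [[Hz1 Hz2] Hz]].
  { lra. } { unfold P3; lra. } { unfold P3; lra. }
  assert (HP : P3 z = 0) by lra.
  assert (Hl : 3018 <= 10000 * z) by lra. assert (Hh : 10000 * z <= 3019) by lra.
  pose proof (r1_3_sign z Hl Hh) as Hr1. pose proof (r0_3_sign z Hl Hh) as Hr0.
  pose proof (N2_3_sign z Hl Hh) as HN2. rewrite N2_3_id in HN2.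
  pose proof (Ntr3_sign z Hl Hh) as HNt. pose proof (Ndet3_sign z Hl Hh) as HNd.
  set (w := - r0_3 z / r1_3 z).
  assert (HR : r1_3 z * w + r0_3 z = 0) by (unfold w; field; lra).
  assert (Hw : 0 < w) by nra.
  assert (Hx2 : 0 < 1 - z - w) by nra.
  assert (HE : F3_0 z w (1 - z - w) + 2 * F3_1 z w (1 - z - w) = 0).
  { pose proof (X3 z w) as HX. rewrite HP, HR in HX.
    apply (pz0 (1 * r1_3 z ^ 2)); [nra | lra]. }
  assert (HH : F3_0 z w (1 - z - w) = 0).
  { pose proof (Y3 z w) as HX. rewrite HE, HR in HX.
    apply (pz0 (1 * e2_3 z ^ 2)); [unfold e2_3; nra | lra]. }
  assert (HF1 : F3_1 z w (1 - z - w) = 0) by lra.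
  assert (HF2 : F3_2 z w (1 - z - w) = 0).
  { pose proof (Fsum3 z w (1 - z - w)) as HS. rewrite HH, HF1 in HS.
    apply (pz0 (1 - z - w)); [lra | lra]. }
  exists (chart z w). split; [|split; [|split]].
  - unfold interior, chart. repeat split; lra.
  - intros i Hi. destruct i as [|[|[|i]]];
      [rewrite IBR3_0 | rewrite IBR3_1 | rewrite IBR3_2 | lia];
      cbv beta iota delta [chart]; [rewrite HH | rewrite HF1 | rewrite HF2]; ring.
  - intros y [Hy0 [Hy1 [Hy2 Hs]]] Hr.
    assert (Ha0 : F3_0 (y 0%nat) (y 1%nat) (y 2%nat) = 0).
    { pose proof (Hr 0%nat ltac:(lia)) as H0. rewrite IBR3_0 in H0.
      apply (pz0 (y 0%nat)); [lra | exact H0]. }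
    assert (Ha2 : F3_1 (y 0%nat) (y 1%nat) (y 2%nat) = 0).
    { pose proof (Hr 1%nat ltac:(lia)) as H0. rewrite IBR3_1 in H0.
      apply (pz0 (y 1%nat)); [lra | exact H0]. }
    assert (Hy2e : y 2%nat = 1 - y 0%nat - y 1%nat) by lra.
    rewrite Hy2e in Ha0, Ha2.
    assert (HPa : 1 * y 0%nat ^ 0 * P3 (y 0%nat) = 0).
    { rewrite (U3 (y 0%nat) (y 1%nat)), Ha0, Ha2. ring. }
    assert (HPa' : P3 (y 0%nat) = 0).
    { apply (pz0 (1 * y 0%nat ^ 0)); [simpl; lra | exact HPa]. }
    assert (Hin1 : 3018 <= 10000 * y 0%nat).
    { destruct (Rle_lt_dec 3018 (10000 * y 0%nat)) as [h|h]; [exact h|].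
      pose proof (P3_left (y 0%nat) ltac:(lra) ltac:(lra)). lra. }
    assert (Hin2 : 10000 * y 0%nat <= 3019).
    { destruct (Rle_lt_dec (10000 * y 0%nat) 3019) as [h|h]; [exact h|].
      pose proof (P3_right (y 0%nat) ltac:(lra) ltac:(lra)). lra. }
    assert (Haz : y 0%nat = z) by (apply P3_uniq; assumption).
    assert (HRb : 1 * (r1_3 (y 0%nat) * y 1%nat + r0_3 (y 0%nat)) = 0).
    { rewrite (V3 (y 0%nat) (y 1%nat)), Ha0, Ha2. ring. }
    rewrite Haz in HRb.
    assert (Hbw : y 1%nat = w).
    { assert (Hq : - r0_3 z = r1_3 z * y 1%nat) by lra.
      unfold w. rewrite Hq. field. lra. }
    intros i Hi. destruct i as [|[|[|i]]]; cbv beta iota delta [chart];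
      [exact Haz | exact Hbw | rewrite Hy2e, Haz, Hbw; ring | lia].
  - exists (J11_3 z w), (J12_3 z w), (J21_3 z w), (J22_3 z w). split.
    + unfold is_jacobian. change (chart z w 0%nat) with z. change (chart z w 1%nat) with w.
      repeat split; [apply D3_11 | apply D3_12 | apply D3_21 | apply D3_22].
    + apply eig_pos.
      * pose proof (Ntr3_id z w) as HT. rewrite HR, Rmult_0_r, Rplus_0_r in HT.
        apply (sign_helper 1 (r1_3 z ^ 3) _ 1 (Ntr3 z)); try lra.
        assert (0 < (- r1_3 z) ^ 3) by (apply pow_lt; lra).
        replace (r1_3 z ^ 3) with (- (- r1_3 z) ^ 3) by ring. nra.
      * pose proof (Ndet3_id z w) as HT. rewrite HR, Rmult_0_r, Rplus_0_r in HT.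
        apply (sign_helper 1 (r1_3 z ^ 6) _ 1 (Ndet3 z)); try lra.
        replace (r1_3 z ^ 6) with ((- r1_3 z) ^ 6) by ring.
        apply Rmult_lt_0_compat; [apply pow_lt|]; lra.
Qed.

Theorem proposition5 :
  (exists p, unique_repelling_interior_rest Game1 p) /\
  (exists p, unique_repelling_interior_rest Game2 p) /\
  (exists p, unique_repelling_interior_rest Game3 p) /\
  (* Game1: the interior rest point is (1/3,1/3,1/3) with eigenvalues (1 ± 2i√26)/27 *)
  (forall p, unique_repelling_interior_rest Game1 p ->
     p 0%nat = 1/3 /\ p 1%nat = 1/3 /\ p 2%nat = 1/3) /\
  (exists J11 J12 J21 J22,
     is_jacobian Game1 (fun _ => 1/3) J11 J12 J21 J22 /\
     forall l, is_eigenvalue2 J11 J12 J21 J22 l <->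
       (l = (1/27, 2 * sqrt 26 / 27) \/ l = (1/27, - (2 * sqrt 26 / 27)))).
Proof.
  split; [exact game1|split; [exact game2|split; [exact game3|split]]].
  - intros p [Hi [Hr [Hu _]]].
    pose proof (Hu (fun _ => 1/3) interior1 rest1) as H.
    split; [|split]; symmetry; apply H; lia.
  - exists (-7/27), (-14/27), (4/9), (1/3). split; [exact jac1| exact eig1].
Qed.
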